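(* Let $w$ be a metric on a finite set $V$, let $T$ be a minimum spanning tree of $G_w$, and let $\mathcal{T}$ be a collection of pairwise edge-disjoint subtrees of $T$. Then $$\mathsf{TSP}(w)\le 2\cdot \mathsf{MST}(w)-\frac12\sum_{T'\in\mathcal{T}}\mathsf{adv}(T').$$
   Context: $V$ is a finite set with $|V|=n\ge 3$ and $w$ a metric on $V$. $G_w$ is the complete graph on $V$ where the edge (pair) $(u,v)$ has weight $w(u,v)$; for a set (or multiset) $E'$ of pairs, $w(E')=\sum_{e\in E'}w(e)$, and for a subgraph $H$, $w(H)=w(E(H))$. $\mathsf{MST}(w)$ is the weight of a minimum spanning tree of $G_w$ and $\mathsf{TSP}(w)$ is the minimum weight of a Hamiltonian cycle of $G_w$. Fix a minimum spanning tree $T$ of $G_w$. For a pair $e=(u,v)$ of distinct vertices, $P^T_e$ denotes the unique $u$–$v$ path in $T$. An edge $f\in E(T)$ is covered by a pair $e$ iff $f\in E(P^T_e)$ (in particular an edge of $T$ covers exactly itself); $\mathsf{cov}(e)$ is the set of edges of $T$ covered by $e$, and $\mathsf{cov}(E')=\bigcup_{e\in E'}\mathsf{cov}(e)$. For a subtree $T'$ of $T$, $\mathsf{cov}(E',T')=\mathsf{cov}(E')\cap E(T')$, and the cover advantage of $E'$ on $T'$ is $\mathsf{adv}(E',T')=w(\mathsf{cov}(E',T'))-w(E')$. The optimal cover advantage $\mathsf{adv}(T')$ is the maximum of $\mathsf{adv}(E',T')$ over all sets $E'$ of pairs each having at least one endpoint in $V(T')$. *)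

(* Defs.v *)
From HB Require Import structures.
From mathcomp Require Import all_boot all_order all_algebra all_fingroup.
From mathcomp Require Import boolp.
Set Implicit Arguments. Unset Strict Implicit. Unset Printing Implicit Defensive.
Import Order.TTheory GRing.Theory Num.Theory.
Local Open Scope ring_scope.

Section Defs.
Variables (R : realFieldType) (V : finType).

Definition metric (w : V -> V -> R) : Prop :=
  [/\ forall x, w x x = 0,
      forall x y, x != y -> 0 < w x y,
      forall x y, w x y = w y x &
      forall x y z, w x z <= w x y + w y z].

(* pairs (edges of the complete graph G_w) are 2-element subsets of V *)
Definition pairs : {set {set V}} := [set e : {set V} | #|e| == 2%N].

Definition wE (w : V -> V -> R) (e : {set V}) : R :=
  if [pick x in e] is Some x then
    (if [pick y in e :\ x] is Some y then w x y else 0) else 0.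

Definition wset (w : V -> V -> R) (E : {set {set V}}) : R := \sum_(e in E) wE w e.

Definition tadj (F : {set {set V}}) : rel V := fun x y => [set x; y] \in F.

Definition spanning (F : {set {set V}}) : bool :=
  [&& F \subset pairs, #|F| == (#|V| - 1)%N &
      [forall x, forall y, connect (tadj F) x y]].

(* minimum of a finite sequence of reals (0 on the empty sequence) *)
Definition minseq (s : seq R) : R := foldr Num.min (head 0 s) s.

Definition MST (w : V -> V -> R) : R :=
  minseq [seq wset w F | F <- enum [pred F | spanning F]].

Definition is_MST (w : V -> V -> R) (T : {set {set V}}) : Prop :=
  spanning T /\ (forall F, spanning F -> wset w T <= wset w F).

(* Hamiltonian cycles are given by cyclic permutations s of V (a single cycle
   through all vertices); their edge set is {{x, s x} | x in V}. *)
Definition hamiltonian (s : {perm V}) : bool :=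
  [forall x, forall y, fconnect s x y].

Definition ham_edges (s : {perm V}) : {set {set V}} := [set [set x; s x] | x : V].

Definition TSP (w : V -> V -> R) : R :=
  minseq [seq wset w (ham_edges s) | s <- enum [pred s : {perm V} | hamiltonian s]].

(* simple paths u = x0, x1, ..., xk = v in the graph with edge set T, given as
   u :: p, and their edge sets *)
Definition tpath (T : {set {set V}}) (u v : V) (p : seq V) : Prop :=
  [/\ path (tadj T) u p, last u p = v & uniq (u :: p)].

Definition pedges (u : V) (p : seq V) : {set {set V}} :=
  [set e in [seq [set xy.1; xy.2] | xy <- zip (u :: p) p]].

(* cov(e): edges of T on the (unique) T-path P^T_e between the ends of e *)
Definition cov (T : {set {set V}}) (e : {set V}) : {set {set V}} :=
  [set f in T | `[< exists u v p, [/\ e = [set u; v], tpath T u v p & f \in pedges u p] >]].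

Definition covS (T E : {set {set V}}) : {set {set V}} := \bigcup_(e in E) cov T e.

Definition Vt (T' : {set {set V}}) : {set V} := [set x | [exists e in T', x \in e]].

Definition subtree (T T' : {set {set V}}) : Prop :=
  T' \subset T /\ (forall x y, x \in Vt T' -> y \in Vt T' -> connect (tadj T') x y).

Definition adv_set (w : V -> V -> R) (T E T' : {set {set V}}) : R :=
  wset w (covS T E :&: T') - wset w E.

(* adv(T'): maximum over sets E' of pairs each with an endpoint in V(T');
   E' = set0 is admissible with value 0, so the max with neutral 0 is exact *)
Definition adv (w : V -> V -> R) (T T' : {set {set V}}) : R :=
  \big[Num.max/0]_(E : {set {set V}} |
      (E \subset pairs) && [forall e in E, [exists x in Vt T', x \in e]])
    adv_set w T E T'.

End Defs.

(* Main.v *)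
Require Import Defs.
From HB Require Import structures.
From mathcomp Require Import all_boot all_order all_algebra all_fingroup.
From mathcomp Require Import boolp.
From mathcomp Require Import ring lra zify.
Set Implicit Arguments. Unset Strict Implicit. Unset Printing Implicit Defensive.
Import Order.TTheory GRing.Theory Num.Theory.
Local Open Scope ring_scope.

Section Walks.
Variables (R : realFieldType) (V : finType) (w : V -> V -> R).
Hypothesis hw : metric w.

Lemma w0 x : w x x = 0. Proof. by case: hw. Qed.
Lemma wsym x y : w x y = w y x. Proof. by case: hw. Qed.
Lemma wtri x y z : w x z <= w x y + w y z. Proof. by case: hw. Qed.
Lemma wge0 x y : 0 <= w x y.
Proof. case: hw => h0 hp _ _; case: (eqVneq x y) => [->|/hp/ltW //]; by rewrite h0. Qed.

Fixpoint pw (x : V) (l : seq V) : R := if l is y :: l' then w x y + pw y l' else 0.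
Definition cw (s : seq V) : R := if s is x :: l then pw x (rcons l x) else 0.

Lemma pw_cat x s t : pw x (s ++ t) = pw x s + pw (last x s) t.
Proof. elim: s x => [|y s IH] x /=; first by rewrite add0r. by rewrite IH addrA. Qed.

Lemma pw_rcons x s y : pw x (rcons s y) = pw x s + w (last x s) y.
Proof. by rewrite -cats1 pw_cat /= addr0. Qed.

Lemma cw_rot s1 v s2 : cw (s1 ++ v :: s2) = cw (v :: s2 ++ s1).
Proof.
case: s1 => [|x s1] /=; first by rewrite cats0.
rewrite rcons_cat /= rcons_cat !pw_cat /= !pw_rcons.
by rewrite [last v s2]/= ; ring.
Qed.

Lemma cw_rotin s v : v \in s -> exists a, cw (v :: a) = cw s /\ (v :: a) =i s.
Proof.
move=> /splitPr [s1 s2]; exists (s2 ++ s1); split; first by rewrite cw_rot.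
move=> z; rewrite !(inE, mem_cat) /=; by case: (z == v); rewrite ?orbT //= orbC.
Qed.

Lemma pw_subseq x y s l : subseq s l -> pw x (rcons s y) <= pw x (rcons l y).
Proof.
elim: l x s => [|z l IH] x s.
  by case: s.
case: s => [|a s] /=.
  move=> _; have := IH z [::] (sub0seq _) => /= h.
  rewrite addr0; apply: le_trans (wtri x z y) _; rewrite addr0 in h; by rewrite lerD2l.
case: eqP => [->|ne] sub.
  by rewrite lerD2l; apply: IH.
have /= h := IH z (a :: s) sub.
apply: le_trans (_ : _ <= w x z + (w z a + pw a (rcons s y))) _.
  by rewrite addrA lerD2r wtri.
by rewrite lerD2l.
Qed.

End Walks.

Section Walks2.
Variables (R : realFieldType) (V : finType) (w : V -> V -> R).
Hypothesis hw : metric w.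

Lemma wE_pair x y : wE w [set x; y] = w x y.
Proof.
rewrite /wE; case: pickP => [a ha|h0]; last by have := h0 x; rewrite !inE eqxx.
case: pickP => [b hb|h1].
  move: ha hb; rewrite !inE => /orP[]/eqP-> /andP[nb /orP[]/eqP Hb];
    subst b; rewrite ?eqxx // in nb *; by rewrite (wsym hw).
move: ha; rewrite !inE => /orP[]/eqP Ha; subst a.
  have := h1 y; rewrite !inE eqxx orbT andbT => /negbFE/eqP->; by rewrite (w0 hw).
have := h1 x; rewrite !inE eqxx andbT => /negbFE/eqP->; by rewrite (w0 hw).
Qed.

Lemma wE_ge0 e : 0 <= wE w e.
Proof. rewrite /wE; case: pickP => // a _; case: pickP => // b _; exact: wge0. Qed.

Lemma wset_ge0 E : 0 <= wset w E.
Proof. by apply: sumr_ge0 => e _; apply: wE_ge0. Qed.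

Lemma foldr_min_le (a : R) s x : x \in s -> foldr Num.min a s <= x.
Proof.
elim: s => // y s IH; rewrite inE /= => /orP[/eqP->|/IH h].
  by rewrite ge_min lexx.
by rewrite ge_min h orbT.
Qed.

Lemma foldr_min_ge (a b : R) s : b <= a -> (forall x, x \in s -> b <= x) -> b <= foldr Num.min a s.
Proof.
move=> ha; elim: s => //= y s IH h; rewrite le_min h ?inE ?eqxx //= IH // => x hx.
by apply: h; rewrite inE hx orbT.
Qed.

Lemma minseq_le (s : seq R) x : x \in s -> minseq s <= x.
Proof. exact: foldr_min_le. Qed.


Lemma sum_next (y0 y : V) p : uniq (y :: p) ->
  \sum_(z <- y :: p) w z (next_at z y0 y p) = pw w y (rcons p y0).
Proof.
elim: p y => [|y' p IH] y /=.
  by rewrite big_cons big_nil eqxx.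
move=> /andP[ny up]; rewrite big_cons eqxx -IH //; congr (_ + _).
apply: eq_big_seq => z hz; have -> : (z == y) = false.
  by apply/eqP=> e; subst z; rewrite hz in ny.
done.
Qed.

Lemma sum_imset_le (h : V -> {set V}) (F : {set V} -> R) :
  (forall e, 0 <= F e) -> \sum_(e in [set h x | x : V]) F e <= \sum_x F (h x).
Proof.
move=> F0; rewrite (partition_big_imset h) /=.
apply: ler_sum => e /imsetP [x _ ->].
rewrite (bigD1 x) //= lerDl; by apply: sumr_ge0.
Qed.

Lemma TSP_le x l : (forall v, v \in x :: l) -> TSP w <= cw w (x :: l).
Proof.
move=> hall.
set c' := undup (filter (predC1 x) l); set c := x :: c'.
have Uc : uniq c by rewrite /= mem_undup mem_filter /= eqxx undup_uniq.
have Ac : forall v, v \in c.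
  move=> v; rewrite inE mem_undup mem_filter /=; case: eqP => //= nv.
  by have := hall v; rewrite inE; case: eqP.
have Hcw : cw w c <= cw w (x :: l).
  apply: pw_subseq => //; apply: subseq_trans (undup_subseq _) (filter_subseq _ _).
set s := perm (can_inj (prev_next Uc)).
have sE : s =1 next c by move=> z; rewrite /s permE.
have hs : hamiltonian s.
  apply/forallP=> a; apply/forallP=> b.
  by rewrite (eq_fconnect sE) (fconnect_cycle (cycle_next Uc) (Ac a)) Ac.
apply: le_trans (_ : TSP w <= wset w (ham_edges s)) _.
  by apply: minseq_le; apply: map_f; rewrite mem_enum.
apply: le_trans Hcw.
apply: le_trans (sum_imset_le _ wE_ge0) _.
rewrite (eq_bigr (fun z => w z (next c z))); last by move=> z _; rewrite wE_pair sE.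
rewrite (eq_bigl (fun z => z \in c)); last by move=> z; rewrite Ac.
rewrite -big_uniq //= sum_next //.
Qed.

End Walks2.

Section Merge.
Variables (R : realFieldType) (V : finType) (w : V -> V -> R).
Hypothesis hw : metric w.

Lemma pw_ge0 x l : 0 <= pw w x l.
Proof. elim: l x => //= y l IH x; by rewrite addr_ge0 ?(wge0 hw). Qed.

Lemma cw_ge0 s : 0 <= cw w s.
Proof. case: s => //= x l; exact: pw_ge0. Qed.

Lemma cw_splice v a b : cw w (v :: a ++ v :: b) = cw w (v :: a) + cw w (v :: b).
Proof. by rewrite /= rcons_cat pw_cat /= !pw_rcons addrA. Qed.

Lemma merge_walks (L : seq (seq V)) (W0 : seq V) : W0 != [::] ->
  exists W, [/\ W != [::], cw w W <= cw w W0 + \sum_(U <- L) cw w U,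
    {subset W0 <= W} & forall U, U \in L -> has (mem W) U -> {subset U <= W}].
Proof.
have [n] := ubnP (size L); elim: n L W0 => // n IH L W0 /ltnSE szL nW0.
case hL: (has (fun U => has (mem W0) U) L); last first.
  exists W0; split => //.
    by rewrite lerDl; apply: sumr_ge0 => U _; apply: cw_ge0.
  by move=> U UL hU; move/hasP: hL; case; exists U.
move/hasP: hL => [U UL /hasP [v vU vW0]].
have [L1 [L2 eL]] : exists L1 L2, L = L1 ++ U :: L2.
  by case/splitPr: (UL) => L1 L2; exists L1, L2.
subst L.
have [a0 [ha0 ma0]] := cw_rotin w vW0.
have [b0 [hb0 mb0]] := cw_rotin w vU.
set W1 := v :: a0 ++ v :: b0.
have sz' : (size (L1 ++ L2) < n)%N.
  move: szL; rewrite !size_cat /=; lia.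
have [W [nW hW sW cW]] := IH (L1 ++ L2) W1 sz' isT.
have s0 : {subset W0 <= W1} by move=> z; rewrite -ma0 /W1 !inE mem_cat => /orP[->|->]; rewrite ?orbT.
have s1 : {subset U <= W1} by move=> z; rewrite -mb0 /W1 !inE mem_cat inE => /orP[->|->]; rewrite ?orbT.
exists W; split => //.
- apply: le_trans hW _; rewrite cw_splice ha0 hb0 !big_cat big_cons /=; lra.
- by move=> z /s0 /sW.
- move=> U'; rewrite mem_cat inE => /orP[h|/orP[/eqP->|h]].
  + by apply: cW; rewrite mem_cat h.
  + by move=> _ z /s1 /sW.
  + by apply: cW; rewrite mem_cat h orbT.
Qed.

End Merge.

Section Decomp.
Variables (R : realFieldType) (V : finType) (w : V -> V -> R).
Hypothesis hw : metric w.

Definition deg (M : seq {set V}) x := count (fun f : {set V} => x \in f) M.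

Lemma pair_split (f : {set V}) b : f \in pairs V -> b \in f -> exists c, c != b /\ f = [set b; c].
Proof.
rewrite inE => /cards2P [x [y [nxy ->]]]; rewrite !inE => /orP[]/eqP->.
  by exists y; rewrite eq_sym.
by exists x; split => //; rewrite setUC.
Qed.

Lemma deg_cons f M x : odd (deg (f :: M) x) = (x \in f) (+) odd (deg M x).
Proof. by rewrite /deg /= oddD; case: (x \in f). Qed.

Lemma trail n (M : seq {set V}) a b : (size M < n)%N -> a != b -> all (mem (pairs V)) M ->
  (forall x, odd (deg M x) = (x == a) || (x == b)) ->
  exists q M', [/\ pw w b (rcons q a) + \sum_(f <- M') wE w f = \sum_(f <- M) wE w f,
    (size M' < size M)%N, all (mem (pairs V)) M', (forall x, ~~ odd (deg M' x)) &
    forall f, f \in M -> f \in M' \/ {subset f <= b :: rcons q a}].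
Proof.
elim: n M a b => // n IH M a b /ltnSE szM nab allM dM.
have : odd (deg M b) by rewrite dM eqxx orbT.
move=> /odd_gt0; rewrite /deg -has_count => /hasP [f fM bf].
have [c [ncb ef]] := pair_split (allP allM f fM) bf.
set M0 := rem f M.
have pM : perm_eq M (f :: M0) := perm_to_rem fM.
have dM0 : forall x, odd (deg M0 x) = (x \in f) (+) odd (deg M x).
  by move=> x; rewrite /deg (seq.permP pM) -/(deg _ x) deg_cons addKb.
have sum0 : \sum_(f <- M) wE w f = wE w f + \sum_(f <- M0) wE w f.
  by rewrite (perm_big _ pM) big_cons.
have allM0 : all (mem (pairs V)) M0.
  by apply/allP => g /mem_rem gM; apply: (allP allM).
have szM0 : (size M0 < size M)%N.
  by rewrite size_rem // ltn_predL; case: (M) fM.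
have memM : forall g, g \in M -> g = f \/ g \in M0.
  by move=> g; rewrite (perm_mem pM) inE => /orP[/eqP->|->]; [left|right].
case: (eqVneq c a) => [ca|nca].
  subst c; exists [::], M0; split => //.
  - by rewrite sum0 ef (wE_pair hw) /= addr0.
  - move=> x; rewrite dM0 dM ef !inE; by case: (x == a); case: (x == b).
  - move=> g /memM [->|]; last by left.
    by right; move=> z; rewrite ef !inE.
have dM0' : forall x, odd (deg M0 x) = (x == a) || (x == c).
  move=> x; rewrite dM0 dM ef !inE.
  case: (eqVneq x b) => [->|xb].
    by rewrite (eq_sym b a) (negbTE nab) (eq_sym b c) (negbTE ncb) ?orbT.
  rewrite /=; case: (eqVneq x c) => [->|xc] /=.
    by rewrite (negbTE nca) orbT.
  by case: (x == a).
have nac : a != c by rewrite eq_sym.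
have [q0 [M' [hw' hsz hall hev hcov]]] := IH M0 a c (leq_trans szM0 szM) nac allM0 dM0'.
exists (c :: q0), M'; split => //.
- by rewrite sum0 ef (wE_pair hw) /= -hw' addrA.
- exact: ltn_trans hsz szM0.
- move=> g /memM [->|/hcov [->|hs]]; [right|by left|right].
    by move=> z; rewrite ef !inE => /orP[]->; rewrite ?orbT.
  by move=> z /hs hz; rewrite inE hz orbT.
Qed.

Lemma decomp n (M : seq {set V}) : (size M < n)%N -> all (mem (pairs V)) M ->
  (forall x, ~~ odd (deg M x)) ->
  exists L : seq (seq V), \sum_(W <- L) cw w W = \sum_(f <- M) wE w f /\
      forall f, f \in M -> exists2 W, W \in L & {subset f <= W}.
Proof.
elim: n M => // n IH [|f M0] /ltnSE szM allM dM.
  by exists [::]; split => //; rewrite !big_nil.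
move: allM => /= /andP [fP allM0].
have := fP; rewrite inE => /cards2P [a [b [nab ef]]].
have dM0 : forall x, odd (deg M0 x) = (x == a) || (x == b).
  move=> x; have := dM x; rewrite deg_cons ef !inE.
  by case: (odd (deg M0 x)); case: (_ || _).
have [q [M' [hw' hsz hall hev hcov]]] := trail (ltnSn (size M0)) nab allM0 dM0.
have [L [hL cL]] := IH M' (leq_trans hsz (ltnW szM)) hall hev.
exists ((a :: b :: q) :: L); split.
  by rewrite !big_cons -hw' -hL ef (wE_pair hw) /= addrA.
move=> g; rewrite inE => /orP[/eqP->|/hcov [/cL [W WL sW]|hs]].
- exists (a :: b :: q); first by rewrite inE eqxx.
  by move=> z; rewrite ef !inE => /orP[]->; rewrite ?orbT.
- by exists W => //; rewrite inE WL orbT.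
- exists (a :: b :: q); first by rewrite inE eqxx.
  move=> z /hs; rewrite inE mem_rcons !inE.
  by case/orP => [->|/orP[]->]; rewrite ?orbT.
Qed.
End Decomp.


Section Tree.
Variable V : finType.
Implicit Types (F T : {set {set V}}) (f e : {set V}).

Lemma tadj_sym F : symmetric (tadj F).
Proof. by move=> x y; rewrite /tadj setUC. Qed.

Lemma connectC F x y : connect (tadj F) x y = connect (tadj F) y x.
Proof. exact: (sym_connect_sym (@tadj_sym F)). Qed.

Lemma set2_eq (a b x y : V) : [set a; b] = [set x; y] ->
  (a = x /\ b = y) \/ (a = y /\ b = x).
Proof.
move=> E.
have ha : a \in [set x; y] by rewrite -E !inE eqxx.
have hb : b \in [set x; y] by rewrite -E !inE eqxx orbT.
have hx : x \in [set a; b] by rewrite E !inE eqxx.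
have hy : y \in [set a; b] by rewrite E !inE eqxx orbT.
move: ha hb hx hy; rewrite !inE.
by do 4! (case/orP=> /eqP ?); subst; auto.
Qed.

Lemma edge_count F r : (forall y, connect (tadj F) y r) -> (#|V| <= #|F| + 1)%N.
Proof.
move=> hc.
pose P y n := [exists t : n.-tuple V, path (tadj F) y t && (last y t == r)].
have hex : forall y, exists n, P y n.
  move=> y; have /connectP [p pp lp] := hc y.
  exists (size p); apply/existsP; exists (in_tuple p); by rewrite /= pp lp eqxx.
pose d y := ex_minn (hex y).
have step : forall y, y != r -> exists z, tadj F y z && (d z < d y)%N.
  move=> y nyr; rewrite /d; case: (ex_minnP (hex y)) => m /existsP [t /andP [pt /eqP lt]] mmin.
  case: t pt lt => [[|z t'] /= szt]; first by move=> _ ly; rewrite ly eqxx in nyr.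
  move=> /andP [yz pt'] lt; exists z; rewrite yz /=.
  case: (ex_minnP (hex z)) => m' _ /(_ (size t')) h.
  have : P z (size t') by apply/existsP; exists (in_tuple t'); rewrite /= pt' lt eqxx.
  move/h; rewrite -(eqP szt) /=; lia.
pose nx y := odflt y [pick z | tadj F y z && (d z < d y)%N].
have hnx : forall y, y != r -> tadj F y (nx y) && (d (nx y) < d y)%N.
  move=> y /step [z hz]; rewrite /nx; case: pickP => [z' -> //|/(_ z)]; by rewrite hz.
pose g y := [set y; nx y].
have ginj : {in [set~ r] &, injective g}.
  move=> y z; rewrite !inE => yr zr /set2_eq [[-> _] //|[e1 e2]].
  have := hnx _ yr; have := hnx _ zr; rewrite -e1 e2 => /andP[_ h1] /andP [_ h2].
  by move: h1; rewrite ltnNge (ltnW h2).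
have sub : g @: [set~ r] \subset F.
  apply/subsetP => e /imsetP [y]; rewrite !inE => yr ->.
  by have /andP [] := hnx _ yr.
have := subset_leq_card sub; rewrite card_in_imset // cardsC1.
by case: #|V| => // k; rewrite addn1 ltnS.
Qed.

Lemma bridge T f x y : spanning T -> f \in T -> f = [set x; y] ->
  ~~ connect (tadj (T :\ f)) x y.
Proof.
move=> /and3P [_ /eqP cT /forallP hc] fT ef; apply/negP => cxy.
have hall : forall a b, connect (tadj (T :\ f)) a b.
  move=> a b; have := forallP (hc a) b.
  apply: connect_sub => c d cd.
  case: (eqVneq [set c; d] f) => [E|ne].
    rewrite ef in E; case: (set2_eq E) => [[-> ->] //|[-> ->]].
    by rewrite connectC.
  by apply: connect1; rewrite /tadj in_setD1 ne.
have := edge_count (fun a => hall a x); rewrite (cardsD1 f T) fT /= in cT.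
move: cT; set t := #|T :\ f|; set k := #|V|; move=> cT hk. lia.
Qed.

End Tree.

Section Paths.
Variable V : finType.
Implicit Types (F T : {set {set V}}) (f e : {set V}) (u z x y : V) (p : seq V).

Definition plist (u : V) (p : seq V) : seq {set V} :=
  [seq [set xy.1; xy.2] | xy <- zip (u :: p) p].

Lemma pedgesE u p : pedges u p = [set g in plist u p].
Proof. by []. Qed.

Lemma plist_cons u z p : plist u (z :: p) = [set u; z] :: plist z p.
Proof. by []. Qed.

Lemma pedges_cons u z p : pedges u (z :: p) = [set u; z] |: pedges z p.
Proof. by apply/setP => g; rewrite !pedgesE plist_cons !inE. Qed.

Lemma plist_sub u p f : f \in plist u p -> {subset f <= u :: p}.
Proof.
elim: p u => //= z p IH u; rewrite inE => /orP[/eqP-> x|/IH h x /h].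
  by rewrite !inE => /orP[]->; rewrite ?orbT.
move=> hx; by rewrite inE hx orbT.
Qed.

Lemma pedges_sub u p f : f \in pedges u p -> {subset f <= u :: p}.
Proof. rewrite pedgesE inE; exact: plist_sub. Qed.

Lemma plist_T T u p f : path (tadj T) u p -> f \in plist u p -> f \in T.
Proof.
elim: p u => //= z p IH u /andP [uz pp]; rewrite inE => /orP[/eqP->//|]; exact: IH.
Qed.

Lemma path_avoid T f u p : path (tadj T) u p -> f \notin pedges u p ->
  path (tadj (T :\ f)) u p.
Proof.
elim: p u => //= z p IH u /andP [uz pp]; rewrite pedges_cons in_setU1 negb_or => /andP [nf nfp].
by rewrite IH // andbT /tadj in_setD1 -/(tadj T u z) uz andbT eq_sym.
Qed.

Lemma notin_f f u z p : uniq (u :: z :: p) -> f \in pedges z p -> [set u; z] != f.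
Proof.
move=> /andP [nu _] fp; apply/eqP => E.
have uf : u \in f by rewrite -E !inE eqxx.
by rewrite (pedges_sub fp uf) in nu.
Qed.

Lemma path_split T f u p : uniq (u :: p) -> path (tadj T) u p -> f \in pedges u p ->
  exists x y, [/\ f = [set x; y], connect (tadj (T :\ f)) u x &
     connect (tadj (T :\ f)) y (last u p)].
Proof.
elim: p u => [|z p IH] u up; first by move=> _; rewrite pedgesE inE.
move=> /andP [uz pp].
rewrite pedges_cons in_setU1; case: (eqVneq f [set u; z]) => [ef _|nf /= fp].
  exists u, z; split => //.
  apply/connectP; exists p => //; apply: path_avoid => //.
  apply/negP => fp; have uf : u \in f by rewrite ef !inE eqxx.
  by move: up => /= /andP []; rewrite (pedges_sub fp uf).
have [x [y [exy cx cy]]] := IH z (andP up).2 pp fp.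
exists x, y; split => //.
apply: connect_trans cx; apply: connect1.
by rewrite /tadj in_setD1 -/(tadj T u z) uz andbT (notin_f up fp).
Qed.

End Paths.

Section Cov.
Variable V : finType.
Implicit Types (F T : {set {set V}}) (f e g : {set V}) (u v z x y : V) (p : seq V).

Lemma cov_path T u v p : spanning T -> tpath T u v p -> cov T [set u; v] = pedges u p.
Proof.
move=> sT [pp lp up]; apply/setP => f; rewrite inE; apply/idP/idP.
  case/andP => fT /asboolP [u' [v' [p' [e' [pp' lp' up'] fp']]]].
  apply/negPn/negP => nf.
  have cuv : connect (tadj (T :\ f)) u v.
    by apply/connectP; exists p; [apply: path_avoid | rewrite lp].
  have [x [y [exy cx cy]]] := path_split up' pp' fp'.
  rewrite lp' in cy.
  have := bridge sT fT exy; apply/negP/negPn.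
  case: (set2_eq e') => [[eu ev]|[eu ev]]; subst u' v'.
    have h1 : connect (tadj (T :\ f)) x u by rewrite connectC.
    have h2 : connect (tadj (T :\ f)) v y by rewrite connectC ev.
    exact: connect_trans (connect_trans h1 cuv) h2.
  have h1 : connect (tadj (T :\ f)) x v by rewrite connectC.
  have h2 : connect (tadj (T :\ f)) v u by rewrite connectC.
  have h3 : connect (tadj (T :\ f)) u y by rewrite connectC eu.
  exact: connect_trans (connect_trans h1 h2) h3.
move=> fp; rewrite (plist_T pp) //=; last by move: fp; rewrite pedgesE inE.
by apply/asboolP; exists u, v, p.
Qed.

Lemma plist_uniq u p : uniq (u :: p) -> uniq (plist u p).
Proof.
elim: p u => // z p IH u /= /andP [nu up]; rewrite IH // andbT.
apply/negP => /plist_sub h; have uu : u \in [set u; z] by rewrite !inE eqxx.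
by rewrite (h u uu) in nu.
Qed.

Lemma plist_parity u p x : uniq (u :: p) ->
  odd (count (fun g => x \in g) (plist u p)) = (x == u) (+) (x == last u p).
Proof.
elim: p u => [|z p IH] u /=; first by rewrite addbb.
move=> /andP [nu up]; rewrite oddD IH // !inE.
case: (eqVneq x u) => [->|xu] /=.
  have -> : (u == z) = false by apply/negbTE; move: nu; rewrite inE; case: (u == z).
  by [].
by case: (x == z); case: (x == last z p).
Qed.

Lemma exists_tpath T e : spanning T -> e \in pairs V ->
  exists u v p, [/\ e = [set u; v], u != v & tpath T u v p].
Proof.
move=> sT; rewrite inE => /cards2P [u [v [nuv ->]]].
move: (sT) => /and3P [_ _ /forallP /(_ u) /forallP /(_ v) /connectP [p0 pp0 lv]].
subst v; move: nuv; case: (shortenP pp0) => p pp up _ nuv.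
by exists u, (last u p), p; split.
Qed.

Lemma count_enum (P : pred {set V}) (A : {set {set V}}) :
  count P (enum A) = #|[set g in A | P g]|.
Proof.
rewrite -sum1_count big_enum_cond -sum1_card; apply: eq_bigl => g; by rewrite inE.
Qed.

Lemma odd_count_set (P : pred {set V}) (s : seq {set V}) :
  odd (count P s) = odd #|[set g | P g && odd (count_mem g s)]|.
Proof.
elim: s => [|a s IH] /=.
  by rewrite (_ : [set g | P g && false] = set0) ?cards0 //; apply/setP => g; rewrite !inE andbF.
set A := [set g | P g && odd (count_mem g s)].
case Pa: (P a) => /=.
  case: (boolP (a \in A)) => aA.
    have -> : [set g | P g && odd ((a == g) + count_mem g s)] = A :\ a.
      apply/setP => g; rewrite !inE; case: (eqVneq g a) => [->|ga] /=.
        by move: aA; rewrite inE Pa add0n /= => ->.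
      by rewrite add0n.
    by rewrite IH (cardsD1 a A) aA /= negbK.
  have -> : [set g | P g && odd ((a == g) + count_mem g s)] = a |: A.
    apply/setP => g; rewrite !inE; case: (eqVneq g a) => [->|ga] /=.
      by move: aA; rewrite inE Pa add0n /= => /negbTE ->.
    by rewrite add0n.
  by rewrite IH cardsU1 aA /=.
have -> : [set g | P g && odd ((a == g) + count_mem g s)] = A.
  apply/setP => g; rewrite !inE; case: (eqVneq g a) => [->|ga] /=; first by rewrite Pa.
  by rewrite add0n.
by rewrite /= ?add0n IH.
Qed.

End Cov.


Section TJ.
Variables (R : realFieldType) (V : finType) (w : V -> V -> R).
Hypothesis hw : metric w.
Variable T : {set {set V}}.
Hypothesis sT : spanning T.

Lemma build (s : seq {set V}) : all (mem (pairs V)) s ->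
  exists NT : seq {set V}, [/\ all (mem T) NT,
    forall f, count_mem f NT = count (fun e => f \in cov T e) s &
    forall x, odd (deg NT x) = odd (count (fun e : {set V} => x \in e) s)].
Proof.
elim: s => [|e s IH] /=; first by exists [::].
case/andP => eP aS; have [NT [hT hc hd]] := IH aS.
have [u [v [p [ee nuv tp]]]] := exists_tpath sT eP.
case: (tp) => pp lp up.
exists (plist u p ++ NT); split.
- rewrite all_cat hT andbT; apply/allP => g; exact: plist_T pp.
- move=> f; rewrite count_cat count_uniq_mem ?plist_uniq // hc ee (cov_path sT tp).
  by rewrite pedgesE inE.
- move=> x; rewrite /deg count_cat oddD plist_parity // -/(deg NT x) hd lp ee !inE oddD.
  rewrite oddb; congr (_ (+) _); case: (eqVneq x u) => [->|] //=.
Qed.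

Lemma pair_walks (s : seq {set V}) : all (mem (pairs V)) s ->
  exists L : seq (seq V), \sum_(W <- L) cw w W = 2 * \sum_(f <- s) wE w f /\
    forall f, f \in s -> exists2 W, W \in L & {subset f <= W}.
Proof.
elim: s => [|f s IH] /=; first by exists [::]; rewrite !big_nil mulr0.
case/andP; rewrite inE => /cards2P [a [b [nab ef]]] /IH [L [hL cL]].
exists ([:: a; b] :: L); split.
  rewrite !big_cons hL ef (wE_pair hw) /= (wsym hw b a); ring.
move=> g; rewrite inE => /orP [/eqP->|/cL [W WL sW]].
  by exists [:: a; b]; rewrite ?inE ?eqxx // ef => z; rewrite !inE.
by exists W; rewrite // inE WL orbT.
Qed.

Lemma path_closed (W : seq V) x p : (forall a b, a \in W -> tadj T a b -> b \in W) ->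
  path (tadj T) x p -> x \in W -> last x p \in W.
Proof.
move=> hcl; elim: p x => //= y p IH x /andP [xy pp] xW; apply: IH => //; exact: hcl xy.
Qed.

Lemma tjoin (r : V) (S : {set {set V}}) : S \subset pairs V ->
  TSP w <= 2 * wset w T - wset w [set f in T | odd #|[set e in S | f \in cov T e]|] + wset w S.
Proof.
move=> SP.
set X := [set f in T | odd #|[set e in S | f \in cov T e]|].
have aS : all (mem (pairs V)) (enum S).
  by apply/allP => e; rewrite mem_enum => /(subsetP SP).
have [NT [hT hc hd]] := build aS.
have XE : X = [set f in T | odd (count_mem f NT)].
  by apply/setP => f; rewrite !inE hc count_enum.
have TP : T \subset pairs V by case/and3P: sT.
have XT : X \subset T by apply/subsetP => f; rewrite inE => /andP[].
set M := enum X ++ enum S.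
have aM : all (mem (pairs V)) M.
  rewrite all_cat aS andbT; apply/allP => f; rewrite mem_enum => /(subsetP XT) /(subsetP TP).
  done.
have eM : forall x, ~~ odd (deg M x).
  move=> x; rewrite /deg count_cat oddD -/(deg (enum S) x).
  have -> : odd (deg (enum X) x) = odd (deg NT x).
    rewrite /deg count_enum odd_count_set.
    suff -> : [set g in X | x \in g] = [set g : {set V} | (x \in g) && odd (count_mem g NT)] by [].
    apply/setP => g; rewrite XE !inE; case: (x \in g) => //=; rewrite ?andbT ?andbF.
    case: (boolP (odd (count_mem g NT))) => og; rewrite ?andbF ?andbT //.
    apply: (allP hT); rewrite -has_pred1 has_count; exact: odd_gt0.
    by [].
  by rewrite hd /deg addbb.
have [L [hL cL]] := decomp hw (ltnSn (size M)) aM eM.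
have aTX : all (mem (pairs V)) (enum (T :\: X)).
  by apply/allP => f; rewrite mem_enum inE => /andP [_ /(subsetP TP)].
have [L2 [hL2 cL2]] := pair_walks aTX.
have [W [nW hW sW cW]] := merge_walks hw (L ++ L2) (isT : [:: r] != [::]).
have hcl : forall a b, a \in W -> tadj T a b -> b \in W.
  move=> a b aW ab.
  have [U UL fU] : exists2 U, U \in L ++ L2 & {subset [set a; b] <= U}.
    case: (boolP ([set a; b] \in X)) => hX.
      have : [set a; b] \in M by rewrite mem_cat mem_enum hX.
      move=> /cL [U UL fU].
      by exists U => //; rewrite mem_cat UL.
    have : [set a; b] \in enum (T :\: X) by rewrite mem_enum inE hX.
    move=> /cL2 [U UL fU].
    by exists U => //; rewrite mem_cat UL orbT.
  have aU : a \in U by apply: fU; rewrite !inE eqxx.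
  have bU : b \in U by apply: fU; rewrite !inE eqxx orbT.
  apply: (cW U UL _ b bU); apply/hasP; by exists a.
have Wall : forall y, y \in W.
  move=> y; case/and3P: sT => _ _ /forallP /(_ r) /forallP /(_ y) /connectP [p pp ->].
  apply: path_closed pp _ => //; apply: sW; exact: mem_head.
case: W nW hW sW cW hcl Wall => // x l _ hW _ _ _ Wall.
apply: le_trans (TSP_le hw Wall) _; apply: le_trans hW _.
rewrite big_cat hL hL2 /= big_cat !big_enum /= (w0 hw) !add0r.
rewrite /wset [\sum_(i in T) _](big_setID X) /= (setIidPr XT); lra.
Qed.

End TJ.


Section Tog.
Variable V : finType.
Implicit Types (S U : {set {set V}}) (k e : {set V}).

Definition tog k S := if k \in S then S :\ k else k |: S.

Lemma togK k : involutive (tog k).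
Proof.
move=> S; rewrite /tog; case: (boolP (k \in S)) => kS.
  by rewrite !inE eqxx /= setD1K.
by rewrite !inE eqxx /= setU1K.
Qed.

Lemma tog_in k S : (k \in tog k S) = (k \notin S).
Proof. by rewrite /tog; case: (boolP (k \in S)) => kS; rewrite !inE eqxx. Qed.

Lemma tog_sub k U S : k \in U -> (tog k S \subset U) = (S \subset U).
Proof.
move=> kU; rewrite /tog; case: (boolP (k \in S)) => kS.
  apply/idP/idP => h; last by apply: subset_trans h; apply: subsetDl.
  by rewrite -(setD1K kS) subUset sub1set kU h.
by rewrite subUset sub1set kU.
Qed.

Lemma tog_card k S (P : pred {set V}) : P k ->
  odd #|[set e in tog k S | P e]| = ~~ odd #|[set e in S | P e]|.
Proof.
move=> Pk; rewrite /tog; case: (boolP (k \in S)) => kS.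
  have kA : k \in [set e in S | P e] by rewrite inE kS Pk.
  have -> : [set e in S :\ k | P e] = [set e in S | P e] :\ k.
    by apply/setP => e; rewrite !inE andbA.
  by rewrite [in RHS](cardsD1 k) kA /= negbK.
have kA : k \notin [set e in S | P e] by rewrite inE (negbTE kS).
have -> : [set e in k |: S | P e] = k |: [set e in S | P e].
  apply/setP => e; rewrite !inE; case: (eqVneq e k) => [->|]; by rewrite ?Pk.
by rewrite cardsU1 kA.
Qed.

Lemma sum_tog (R : realFieldType) k U (b : {set {set V}} -> bool) : k \in U ->
  (forall S, b (tog k S) = ~~ b S) ->
  \sum_(S : {set {set V}} | S \subset U) (b S)%:R * 2 = \sum_(S : {set {set V}} | S \subset U) (1 : R).
Proof.
move=> kU hb.
have E : \sum_(S : {set {set V}} | S \subset U) (b S)%:R = \sum_(S : {set {set V}} | S \subset U) (~~ b S)%:R :> R.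
  rewrite (reindex_inj (can_inj (togK k))) /=.
  by apply: eq_big => S; rewrite ?tog_sub // => _; rewrite hb.
rewrite -big_distrl /= (_ : 2 = 1 + 1) // mulrDr mulr1 {2}E -big_split /=.
by apply: eq_bigr => S _; case: (b S); rewrite ?addr0 ?add0r.
Qed.

End Tog.

Section Avg.
Variables (R : realFieldType) (V : finType) (w : V -> V -> R) (T : {set {set V}}).

Definition Xs (S : {set {set V}}) := [set f in T | odd #|[set e in S | f \in cov T e]|].

Lemma covS_sub U : covS T U \subset T.
Proof. apply/bigcupsP => e _; apply/subsetP => f; rewrite inE => /andP[]. done. Qed.

Lemma sum_ind (A B : {set {set V}}) (F : {set V} -> R) : B \subset A ->
  \sum_(e in A) (e \in B)%:R * F e = \sum_(e in B) F e.
Proof.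
move=> BA; rewrite (bigID (fun e => e \in B)) /= [X in _ + X]big1 ?addr0; last first.
  by move=> e /andP [_ /negbTE ->]; rewrite mul0r.
apply: eq_big => e; last by move=> /andP [_ ->]; rewrite mul1r.
by apply/andP/idP => [[]//|eB]; split => //; apply: (subsetP BA).
Qed.

Lemma avg (U : {set {set V}}) : exists2 S : {set {set V}}, S \subset U &
  wset w (covS T U) - wset w U <= 2 * (wset w (Xs S) - wset w S).
Proof.
set N := \sum_(S : {set {set V}} | S \subset U) (1 : R).
have HS : \sum_(S : {set {set V}} | S \subset U) wset w S * 2 = N * wset w U.
  transitivity (\sum_(S : {set {set V}} | S \subset U) \sum_(e in U) (e \in S)%:R * wE w e * 2).
    apply: eq_bigr => S SU; rewrite /wset big_distrl /= -(sum_ind _ SU).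
    by apply: eq_bigr => e _; rewrite mulrA.
  rewrite exchange_big /= /wset big_distrr /=; apply: eq_bigr => e eU.
  transitivity (\sum_(S : {set {set V}} | S \subset U) ((e \in S)%:R * 2) * wE w e).
    by apply: eq_bigr => S _; rewrite mulrAC.
  rewrite -big_distrl /= (@sum_tog _ R e U (fun S => e \in S) eU) //.
  by move=> S; rewrite tog_in.
have HX : \sum_(S : {set {set V}} | S \subset U) wset w (Xs S) * 2 = N * wset w (covS T U).
  transitivity (\sum_(S : {set {set V}} | S \subset U) \sum_(f in T)
      (odd #|[set e in S | f \in cov T e]|)%:R * wE w f * 2).
    apply: eq_bigr => S SU; rewrite /wset big_distrl /=.
    rewrite [RHS](bigID (fun f => odd #|[set e in S | f \in cov T e]|)) /= [X in _ = _ + X]big1 ?addr0; last first.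
      by move=> f /andP [_ /negbTE ->]; rewrite !mul0r.
    apply: eq_big => f; first by rewrite inE.
    by rewrite inE => /andP [_ ->]; rewrite mul1r.
  rewrite exchange_big /=.
  transitivity (\sum_(f in T) (f \in covS T U)%:R * (N * wE w f)).
    apply: eq_bigr => f fT.
    transitivity (\sum_(S : {set {set V}} | S \subset U)
        ((odd #|[set e in S | f \in cov T e]|)%:R * 2) * wE w f).
      by apply: eq_bigr => S _; rewrite mulrAC.
    rewrite -big_distrl /= mulrA.
    case: (boolP (f \in covS T U)) => hf.
      move: (hf) => /bigcupP [e eU fe].
      rewrite (@sum_tog _ R e U (fun S => odd #|[set e in S | f \in cov T e]|) eU) ?mul1r //.
      by move=> S; rewrite tog_card.
    rewrite mul0r big1 ?mul0r // => S SU.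
    rewrite (_ : [set e in S | f \in cov T e] = set0) ?cards0 ?mul0r //.
    apply/setP => e; rewrite !inE; apply/negP => /andP [eS fe].
    by move/negP: hf; apply; apply/bigcupP; exists e; [exact: (subsetP SU) | rewrite inE].
  by rewrite sum_ind ?covS_sub // /wset big_distrr.
have Hsum : \sum_(S : {set {set V}} | S \subset U) (wset w (Xs S) - wset w S) * 2 =
    N * (wset w (covS T U) - wset w U).
  rewrite (eq_bigr (fun S => wset w (Xs S) * 2 - wset w S * 2)); last by move=> S _; rewrite mulrBl.
  by rewrite sumrB HS HX mulrBr.
case: (pselect (exists2 S : {set {set V}}, S \subset U &
  wset w (covS T U) - wset w U <= 2 * (wset w (Xs S) - wset w S))) => // hne.
exfalso.
have hlt : forall S : {set {set V}}, S \subset U ->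
    (wset w (Xs S) - wset w S) * 2 < wset w (covS T U) - wset w U.
  move=> S SU; rewrite ltNge; apply/negP => hle; apply: hne; exists S => //.
  by rewrite mulrC.
have H1 : \sum_(S : {set {set V}} | S \subset U) (wset w (Xs S) - wset w S) * 2 <
    \sum_(S : {set {set V}} | S \subset U) (wset w (covS T U) - wset w U).
  rewrite (bigD1 set0) ?sub0set //= [X in _ < X](bigD1 set0) ?sub0set //=.
  apply: ltr_leD; first exact: hlt (sub0set _).
  by apply: ler_sum => S /andP [SU _]; apply: ltW; apply: hlt.
move: H1; rewrite Hsum /N big_distrl /=.
rewrite (eq_bigr (fun S => wset w (covS T U) - wset w U)) ?lt_irreflexive //.
by move=> S _; rewrite mul1r.
Qed.

End Avg.


Section Final.
Variables (R : realFieldType) (V : finType) (w : V -> V -> R).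
Hypothesis hw : metric w.

Lemma wset_mono (A B : {set {set V}}) : A \subset B -> wset w A <= wset w B.
Proof.
move=> AB; rewrite /wset [X in _ <= X](big_setID A) /= (setIidPr AB) lerDl.
by apply: sumr_ge0 => e _; apply: (wE_ge0 hw).
Qed.

Lemma adv_attained (T T' : {set {set V}}) :
  exists E : {set {set V}}, (E \subset pairs V) && (adv w T T' <= adv_set w T E T').
Proof.
rewrite /adv; set F := adv_set w T ^~ T'.
have F0 : F set0 = 0.
  rewrite /F /adv_set /covS big_set0 set0I /wset !big_set0 subr0 //.
apply: (big_rec (fun x => exists E : {set {set V}}, (E \subset pairs V) && (x <= F E))).
  by exists set0; rewrite sub0set F0 lexx.
move=> E x /andP [EP _] [E' /andP [E'P hx]].
case: (leP x (F E)) => h.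
  by exists E; rewrite EP lexx.
by exists E'; rewrite E'P hx.
Qed.

Lemma sum_disj (TT : {set {set {set V}}}) (A : {set {set V}}) :
  (forall X Y, X \in TT -> Y \in TT -> X != Y -> [disjoint X & Y]) ->
  \sum_(T' in TT) wset w (A :&: T') <= wset w A.
Proof.
move=> hd.
rewrite (eq_bigr (fun T' => \sum_(f in A) (f \in A :&: T')%:R * wE w f)); last first.
  by move=> T' _; rewrite sum_ind //; exact: subsetIl.
rewrite exchange_big /=; apply: ler_sum => f fA.
rewrite -big_distrl /= -[X in _ <= X]mul1r; apply: ler_wpM2r; first exact: (wE_ge0 hw).
case: (pickP (fun T' => (T' \in TT) && (f \in T'))) => [T0 /andP [T0T fT0]|none].
  rewrite (bigD1 T0) //= big1 ?addr0; first by rewrite inE fA fT0.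
  move=> T' /andP [T'T ne]; rewrite inE (disjointFr (hd _ _ T0T T'T _) fT0) ?andbF //.
  by rewrite eq_sym.
rewrite big1 ?ler01 // => T' T'T; have := none T'; rewrite T'T /= inE => ->.
by rewrite andbF.
Qed.

Lemma sum_bigcup (TT : {set {set {set V}}}) (E : {set {set V}} -> {set {set V}}) :
  wset w (\bigcup_(T' in TT) E T') <= \sum_(T' in TT) wset w (E T').
Proof.
set U := \bigcup_(T' in TT) E T'.
have sub : forall T', T' \in TT -> E T' \subset U by move=> T' hT; apply: bigcup_sup.
rewrite (eq_bigr (fun T' => \sum_(f in U) (f \in E T')%:R * wE w f)); last first.
  by move=> T' hT; rewrite sum_ind //; apply: sub.
rewrite exchange_big /=; apply: ler_sum => f fU.
rewrite -big_distrl /= -[X in X <= _]mul1r; apply: ler_wpM2r; first exact: (wE_ge0 hw).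
have [T0 T0T fT0] := bigcupP fU.
rewrite (bigD1 T0) //= fT0 lerDl; apply: sumr_ge0 => T' _; exact: ler0n.
Qed.

End Final.

Lemma MST_ge (R : realFieldType) (V : finType) (w : V -> V -> R) T :
  is_MST w T -> wset w T <= MST w.
Proof.
case=> sT hmin; rewrite /MST /minseq.
set L := [seq wset w F | F <- enum [pred F | spanning F]].
have TL : wset w T \in L by apply: map_f; rewrite mem_enum.
have hall : forall x, x \in L -> wset w T <= x.
  by move=> x /mapP [F]; rewrite mem_enum => /hmin h ->.
apply: foldr_min_ge => //; case: L TL hall => // a L' _ h; apply: h; exact: mem_head.
Qed.

Theorem mainTheorem1 (R : realFieldType) (V : finType) (w : V -> V -> R)
    (T : {set {set V}}) (TT : {set {set {set V}}}) :
  (3 <= #|V|)%N ->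
  metric w ->
  is_MST w T ->
  (forall T', T' \in TT -> subtree T T') ->
  (forall A B, A \in TT -> B \in TT -> A != B -> [disjoint A & B]) ->
  TSP w <= 2 * MST w - 2^-1 * \sum_(T' in TT) adv w T T'.
Proof.
move=> h3 hw hM hsub hdisj.
have sT : spanning T by case: hM.
have /card_gt0P [r _] : (0 < #|V|)%N by apply: leq_trans h3.
pose Ech (T' : {set {set V}}) := odflt set0 [pick E : {set {set V}} | (E \subset pairs V) && (adv w T T' <= adv_set w T E T')].
have hE : forall T', (Ech T' \subset pairs V) && (adv w T T' <= adv_set w T (Ech T') T').
  move=> T'; rewrite /Ech; case: pickP => [E -> //|none].
  by have [E hE'] := adv_attained w T T'; rewrite none in hE'.
set U := \bigcup_(T' in TT) Ech T'.
have UP : U \subset pairs V by apply/bigcupsP => T' _; case/andP: (hE T').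
have [S SU hS] := avg w T U.
have hT := tjoin hw sT r (subset_trans SU UP).
have hMST := MST_ge hM.
have hadv : \sum_(T' in TT) adv w T T' <= wset w (covS T U) - wset w U.
  apply: le_trans (_ : _ <= \sum_(T' in TT) adv_set w T (Ech T') T') _.
    by apply: ler_sum => T' _; case/andP: (hE T').
  have h1 : \sum_(T' in TT) wset w (covS T (Ech T') :&: T') <= wset w (covS T U).
    apply: le_trans (_ : _ <= \sum_(T' in TT) wset w (covS T U :&: T')) _.
      apply: ler_sum => T' hT'; apply: wset_mono => //; apply: setSI.
      apply/bigcupsP => e eE; apply: (bigcup_sup e).
      exact: (subsetP (bigcup_sup T' hT')).
    exact: sum_disj.
  have h2 : wset w U <= \sum_(T' in TT) wset w (Ech T') := sum_bigcup hw TT Ech.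
  rewrite /adv_set sumrB; lra.
rewrite /Xs in hS.
lra.
Qed.
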